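(* For every positive integer $t$, $$ma_t(t)=\frac12+\frac{\lfloor (t-1)/2\rfloor}{2t}.$$
   Context: A voter matrix with $t$ topics is a matrix $V\in\{Y,N\}^{n\times t}$ for some positive integer $n$ (rows are voters), subject to the standing assumption that in every column the number of entries $Y$ is at least the number of entries $N$. $\mathcal{V}_t$ is the set of all voter matrices with $t$ topics and any number of voters. A proposal is a vector $p\in\{Y,N\}^t$. A voter $v$ supports $p$ if the Hamming distance between $v$ and $p$ is at most $t/2$; $p$ is supported by $V$ if at least $n/2$ rows of $V$ support $p$. $md_V$ is the maximum number of entries $Y$ of a proposal supported by $V$. $m_V$ denotes the fraction of entries $Y$ among all $nt$ entries of $V$ (the average majority). For an integer $w$ with $\lceil (t+1)/2\rceil\le w\le t$, $ma_t(w)$ is the supremum of $m_V$ over all $V\in\mathcal{V}_t$ with $md_V<w$, with the convention that $ma_t(w)=\frac12$ if no such $V$ exists. *)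

(* Defs.v *)
From HB Require Import structures.
From mathcomp Require Import all_boot all_order all_algebra.
From mathcomp Require Import boolp classical_sets reals.
Set Implicit Arguments. Unset Strict Implicit. Unset Printing Implicit Defensive.
Import Order.TTheory GRing.Theory Num.Theory.
Local Open Scope classical_set_scope.

(* Entries: true = Y, false = N.  A voter matrix with t topics and n voters
   is V : 'M[bool]_(n,t) with n positive and, in every column, #Y >= #N,
   i.e. n <= 2 * #Y. *)
Definition voter_matrix (n t : nat) (V : 'M[bool]_(n, t)) : Prop :=
  (0 < n)%N /\ forall j : 'I_t, (n <= 2 * #|[set i : 'I_n | V i j]|)%N.

Definition proposal (t : nat) := {ffun 'I_t -> bool}.

Definition hamming (n t : nat) (V : 'M[bool]_(n, t)) (i : 'I_n) (p : proposal t) : nat :=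
  #|[set j : 'I_t | V i j != p j]|.

Definition supports (n t : nat) (V : 'M[bool]_(n, t)) (i : 'I_n) (p : proposal t) : bool :=
  (2 * hamming V i p <= t)%N.

Definition supported (n t : nat) (V : 'M[bool]_(n, t)) (p : proposal t) : bool :=
  (n <= 2 * #|[set i : 'I_n | supports V i p]|)%N.

Definition numY (t : nat) (p : proposal t) : nat := #|[set j : 'I_t | p j]|.

Definition md (n t : nat) (V : 'M[bool]_(n, t)) : nat :=
  \max_(p : proposal t | supported V p) numY p.

Definition mV (R : realType) (n t : nat) (V : 'M[bool]_(n, t)) : R :=
  ((#|[set ij : 'I_n * 'I_t | V ij.1 ij.2]|)%:R / (n * t)%:R)%R.
Arguments mV R {n t} V.

Definition ma_set (R : realType) (t w : nat) : set R :=
  [set x | exists (n : nat) (V : 'M[bool]_(n, t)),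
      voter_matrix V /\ (md V < w)%N /\ x = mV R V].
Arguments ma_set : clear implicits.

Definition ma (R : realType) (t w : nat) : R :=
  if `[< ma_set R t w !=set0 >] then sup (ma_set R t w) else (2^-1)%R.
Arguments ma : clear implicits.

(* Main.v *)
Require Import Defs.
From HB Require Import structures.
From mathcomp Require Import all_boot all_order all_algebra.
From mathcomp Require Import boolp classical_sets reals.
From mathcomp Require Import zify ring lra.
Import Order.TTheory GRing.Theory Num.Theory.
Set Implicit Arguments. Unset Strict Implicit.
Local Open Scope ring_scope.

Lemma cardE_cl (T : finType) (P : pred T) : #|[set x | P x]%classic| = #|[set x | P x]|.
Proof. by apply: eq_card => x; rewrite inE /in_mem /= /in_set asboolb. Qed.

Definition p1 (t : nat) : proposal t := [ffun _ => true].
Definition rowY n t (V : 'M[bool]_(n, t)) i := #|[set j : 'I_t | V i j]|.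
Definition total n t (V : 'M[bool]_(n, t)) := #|[set ij : 'I_n * 'I_t | V ij.1 ij.2]|.

Lemma hamming_p1 n t (V : 'M[bool]_(n, t)) i : (hamming V i (p1 t) + rowY V i = t)%N.
Proof.
rewrite /hamming /rowY cardE_cl.
have -> : [set j : 'I_t | V i j != p1 t j] = ~: [set j | V i j].
  by apply/setP => j; rewrite !inE ffunE; case: (V i j).
by rewrite addnC cardsC card_ord.
Qed.

Lemma rowY_le n t (V : 'M[bool]_(n, t)) i : (rowY V i <= t)%N.
Proof. by have := hamming_p1 V i; lia. Qed.

Lemma numY_p1 t : numY (p1 t) = t.
Proof.
rewrite /numY cardE_cl; have -> : [set j : 'I_t | p1 t j] = finset.setT by apply/setP => j; rewrite !inE ffunE.
by rewrite cardsT card_ord.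
Qed.

Lemma numY_eq t (p : proposal t) : numY p = t -> p = p1 t.
Proof.
move=> h; have : #|~: [set j | p j]| = 0%N by move: h; rewrite /numY cardE_cl; have := cardsC [set j | p j]; rewrite card_ord; lia.
move/cards0_eq => e; apply/ffunP => j; rewrite ffunE.
apply/negPn/negP => pj.
have : j \in ~: [set j | p j] by rewrite !inE.
by rewrite e inE.
Qed.

Lemma md_lt n t (V : 'M[bool]_(n, t)) : (0 < t)%N ->
  (md V < t)%N <-> ~~ supported V (p1 t).
Proof.
move=> t0; split.
  move=> h; apply/negP => sp.
  have : (numY (p1 t) <= md V)%N by apply: (leq_bigmax_cond (p1 t)).
  by rewrite numY_p1; lia.
move=> ns.
suff : (md V <= t.-1)%N by lia.
apply/bigmax_leqP => p sp.
have : (numY p <= t)%N by rewrite /numY cardE_cl; have := max_card (mem [set j | p j]); rewrite card_ord.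
case: (eqVneq (numY p) t) => [/numY_eq e|ne]; last by lia.
by move: sp; rewrite e => sp; rewrite sp in ns.
Qed.

Lemma total_sum n t (V : 'M[bool]_(n, t)) : total V = (\sum_i rowY V i)%N.
Proof.
rewrite /total /rowY -sum1_card.
rewrite (eq_bigl (fun ij : 'I_n * 'I_t => V ij.1 ij.2)); last by move=> ij; rewrite inE.
rewrite -(pair_big_dep xpredT (fun i j => V i j) (fun _ _ => 1%N)) /=.
by apply: eq_bigr => i _; rewrite -sum1_card; apply: eq_bigl => j; rewrite inE.
Qed.

Lemma bad_row t (Y : nat) : (0 < t)%N -> (t < 2 * (t - Y))%N -> (Y <= (t.-1)./2)%N.
Proof.
move=> t0 h; have := odd_double_half t.-1; rewrite -muln2; case: (odd _) => /=; lia.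
Qed.

Lemma ub n t (V : 'M[bool]_(n, t)) : (0 < t)%N -> ~~ supported V (p1 t) ->
  (2 * total V < n * (t + (t.-1)./2))%N.
Proof.
move=> t0 ns.
set S := [set i | supports V i (p1 t)].
have hS : (2 * #|S| < n)%N by move: ns; rewrite /supported cardE_cl -ltnNge.
rewrite total_sum (bigID (mem S)) /=.
have h1 : (\sum_(i | i \in S) rowY V i <= #|S| * t)%N.
  by rewrite -sum_nat_const; apply: leq_sum => i _; exact: rowY_le.
have h2 : (\sum_(i | i \notin S) rowY V i <= \sum_(i | i \notin S) (t.-1)./2)%N.
  apply: leq_sum => i hi; apply: bad_row => //.
  move: hi; rewrite inE /supports; have := hamming_p1 V i; lia.
rewrite sum_nat_cond_const in h2.
have hc := cardsC S; rewrite card_ord in hc.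
have e : ~: S = [set x | x \notin S] by [].
rewrite e in hc.
have hk : (2 * (t.-1)./2 < t)%N.
  by have := odd_double_half t.-1; rewrite -muln2; case: (odd _) => /=; lia.
move: h1 h2 hc hS hk.
set a := #|S|; set b := #|[set x | x \notin S]|; set k := t.-1./2.
move=> h1 h2 hc hS hk.
have hm : (a * (t - k) < b * (t - k))%N by rewrite ltn_pmul2r; lia.
move: h1 h2; set A := (\sum_(i in S) rowY V i)%N; set B := (\sum_(i | i \notin S) rowY V i)%N.
move=> h1 h2; rewrite -hc; nia.
Qed.

Lemma empty_case n t (V : 'M[bool]_(n, t)) : (0 < t)%N -> (t.-1)./2 = 0%N ->
  voter_matrix V -> ~~ supported V (p1 t) -> False.
Proof.
move=> t0 k0 [n0 hv] ns.
set S := [set i | supports V i (p1 t)].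
have hS : (2 * #|S| < n)%N by move: ns; rewrite /supported cardE_cl -ltnNge.
have := hv (Ordinal t0); rewrite cardE_cl => hc.
have sub : [set i | V i (Ordinal t0)] \subset S.
  apply/fintype.subsetP => i; rewrite !inE => vi; apply/negPn/negP => hi.
  have : (rowY V i <= 0)%N.
    rewrite -k0; apply: bad_row => //; move: hi; rewrite /supports; have := hamming_p1 V i; lia.
  rewrite leqn0 => /eqP /cards0_eq e.
  have : Ordinal t0 \in [set j | V i j] by rewrite inE.
  by rewrite e inE.
have := subset_leq_card sub; lia.
Qed.

Lemma card_lt n k : (k <= n)%N -> #|[set i : 'I_n | (i < k)%N]| = k.
Proof.
move=> kn.
have -> : [set i : 'I_n | (i < k)%N] = widen_ord kn @: finset.setT.
  apply/setP => i; rewrite inE; apply/idP/imsetP.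
    by move=> ik; exists (Ordinal ik); rewrite ?inE //; apply: val_inj.
  by case=> j _ ->; rewrite /= ltn_ord.
by rewrite card_imset ?cardsT ?card_ord //; by move=> a b [] /val_inj.
Qed.

Section Constr.
Variables (s m : nat).
Hypothesis sm : (s < m)%N.
Let k := s./2.
Let n := (2 * m).+1.
Definition Vc : 'M[bool]_(n, s.+1) :=
  \matrix_(i < n, j < s.+1) if (i <= m)%N then (((j + inZp i)%R : 'I_s.+1) < k)%N else true.

Lemma rowY_Vc i : rowY Vc i = if (i <= m)%N then k else s.+1.
Proof.
rewrite /rowY; case: ifP => im.
  have -> : [set j | Vc i j] = (fun j => j + inZp i)%R @^-1: [set j : 'I_s.+1 | (j < k)%N].
    by apply/setP => j; rewrite !inE mxE im.
  rewrite card_preimset; last exact: addIr.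
  apply: card_lt; rewrite /k; have := half_leq (leqnSn s); rewrite -divn2; lia.
have -> : [set j | Vc i j] = finset.setT by apply/setP => j; rewrite !inE mxE im.
by rewrite cardsT card_ord.
Qed.

Lemma card_low : #|[set i : 'I_n | (i <= m)%N]| = m.+1.
Proof. by apply: (@card_lt n m.+1); rewrite /n; lia. Qed.

Lemma card_high : #|[set i : 'I_n | ~~ (i <= m)%N]| = m.
Proof.
have := cardsC [set i : 'I_n | (i <= m)%N]; rewrite card_low card_ord.
have -> : ~: [set i : 'I_n | (i <= m)%N] = [set i : 'I_n | ~~ (i <= m)%N].
  by apply/setP => i; rewrite !inE.
rewrite /n; lia.
Qed.

Lemma total_Vc : total Vc = (m.+1 * k + m * s.+1)%N.
Proof.
rewrite total_sum (bigID (fun i : 'I_n => (i <= m)%N)) /=.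
under eq_bigr => i im do rewrite rowY_Vc im.
under [X in (_ + X)%N]eq_bigr => i im do rewrite rowY_Vc (negbTE im).
by rewrite !sum_nat_cond_const card_low card_high.
Qed.
End Constr.

Section Constr2.
Variables (s m : nat).
Hypothesis sm : (s < m)%N.
Hypothesis k1 : (0 < s./2)%N.

Lemma Vc_ns : ~~ supported (Vc s m) (p1 s.+1).
Proof.
rewrite /supported cardE_cl -ltnNge.
have sub : [set i | supports (Vc s m) i (p1 s.+1)] \subset [set i : 'I_(2 * m).+1 | ~~ (i <= m)%N].
  apply/fintype.subsetP => i; rewrite !inE /supports; apply: contraTN => im.
  have := hamming_p1 (Vc s m) i; rewrite rowY_Vc // ifT //.
  have := odd_double_half s; rewrite -muln2; case: (odd _) => /=; lia.
have := subset_leq_card sub; rewrite (card_high sm); lia.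
Qed.

Lemma Vc_voter : voter_matrix (Vc s m).
Proof.
split => // j; rewrite cardE_cl.
have i0lt : (nat_of_ord (- j)%R < (2 * m).+1)%N by have := ltn_ord (- j)%R; lia.
set i0 : 'I_(2 * m).+1 := Ordinal i0lt.
have sub : i0 |: [set i : 'I_(2 * m).+1 | ~~ (i <= m)%N] \subset [set i | Vc s m i j].
  apply/fintype.subsetP => i; rewrite !inE mxE => /orP [/eqP -> | /negbTE -> //].
  have -> : (i0 <= m)%N by have := ltn_ord (- j)%R; rewrite /=; lia.
  have e : (inZp i0 : 'I_s.+1) = (- j)%R := valZpK (- j)%R.
  by rewrite e subrr.
have h : (i0 \notin [set i : 'I_(2 * m).+1 | ~~ (i <= m)%N]).
  by rewrite inE negbK /=; have := ltn_ord (- j)%R; lia.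
have := subset_leq_card sub; rewrite cardsU1 (card_high sm) h.
lia.
Qed.
End Constr2.

Lemma mV_total (R : realType) n t (V : 'M[bool]_(n, t)) :
  mV R V = (total V)%:R / (n * t)%:R.
Proof. by rewrite /mV cardE_cl. Qed.

Lemma real_ub (R : realType) (tot n t k : nat) : (0 < n)%N -> (0 < t)%N ->
  (2 * tot < n * (t + k))%N ->
  tot%:R / (n * t)%:R < 2^-1 + k%:R / (2 * t)%:R :> R.
Proof.
move=> n0 t0 h.
have nt0 : 0 < (n * t)%:R :> R by rewrite ltr0n muln_gt0 n0.
rewrite ltr_pdivrMr //.
have tn0 : t%:R != 0 :> R by rewrite pnatr_eq0 -lt0n.
have nn0 : n%:R != 0 :> R by rewrite pnatr_eq0 -lt0n.
have -> : (2^-1 + k%:R / (2 * t)%:R) * (n * t)%:R = (n * (t + k))%:R / 2 :> R.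
  rewrite !natrM natrD; field; rewrite tn0 /=.
  by [].
rewrite ltr_pdivlMr ?ltr0n // -[2 : R]/(2%:R) -natrM ltr_nat; lia.
Qed.

Lemma real_lb (R : realType) (m t k : nat) : (0 < t)%N -> (k <= t)%N ->
  2^-1 + k%:R / (2 * t)%:R <=
  (m.+1 * k + m * t)%:R / ((2 * m).+1 * t)%:R + (m.+1%:R)^-1 :> R.
Proof.
move=> t0 kt.
have tp : 0 < t%:R :> R by rewrite ltr0n.
have tn0 : t%:R != 0 :> R by rewrite pnatr_eq0 -lt0n.
have m1 : (2 * m).+1%:R != 0 :> R by rewrite pnatr_eq0.
have m2 : m.+1%:R != 0 :> R by rewrite pnatr_eq0.
rewrite -lerBlDl.
have -> : 2^-1 + k%:R / (2 * t)%:R - (m.+1 * k + m * t)%:R / ((2 * m).+1 * t)%:R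
   = (t%:R - k%:R) / (2 * (2 * m).+1%:R * t%:R) :> R.
  rewrite !natrM !natrD !natrM /=.
  rewrite -(natr1 (2 * m)) -(natr1 m) natrM in m1 m2 *.
  field.
  by rewrite tn0 /= m1.
have hp : 0 < 2 * (2 * m).+1%:R * t%:R :> R.
  by rewrite mulr_gt0 // mulr_gt0 // ltr0n.
rewrite ler_pdivrMr // [leRHS]mulrC ler_pdivlMr ?ltr0n //.
have kt' : k%:R <= t%:R :> R by rewrite ler_nat.
have k0 : 0 <= k%:R :> R by rewrite ler0n.
have m0 : 0 <= m%:R :> R by rewrite ler0n.
rewrite -(natr1 (2 * m)) -(natr1 m) natrM.
nra.
Qed.

Theorem lemma5p8 (R : realType) (t : nat) : (0 < t)%N ->
  ma R t t = 2^-1 + ((t.-1)./2)%:R / (2 * t)%:R.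
Proof.
case: t => // s _ /=.
set bnd := (2^-1 + (s./2)%:R / (2 * s.+1)%:R : R).
have ubS : forall x, ma_set R s.+1 s.+1 x -> x < bnd.
  move=> x [n [V [hv [hmd ->]]]].
  rewrite mV_total; apply: real_ub => //; first by case: hv.
  exact/ub/md_lt.
rewrite /ma.
case: (eqVneq (s./2) 0%N) => k0.
  have -> : `[< (ma_set R s.+1 s.+1 !=set0)%classic >] = false.
    apply/negbTE/negP => /asboolP [x [n [V [hv [hmd _]]]]].
    exact: (empty_case (t := s.+1) isT k0 hv (proj1 (md_lt V isT) hmd)).
  by rewrite /bnd k0 mul0r addr0.
have k1 : (0 < s./2)%N by rewrite lt0n.
have inS : forall m, (s < m)%N -> ma_set R s.+1 s.+1 (mV R (Vc s m)).
  move=> m sm; exists (2 * m).+1, (Vc s m); split; first exact: Vc_voter.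
  by split => //; apply/md_lt => //; exact: Vc_ns.
have ne : (ma_set R s.+1 s.+1 !=set0)%classic by exists (mV R (Vc s s.+1)); exact: inS.
rewrite asboolT //.
have hub : has_ubound (ma_set R s.+1 s.+1) by exists bnd => x /ubS /ltW.
apply/eqP; rewrite eq_le; apply/andP; split.
  by apply: ge_sup => // x /ubS /ltW.
rewrite leNgt; apply/negP => hlt.
set e := bnd - sup (ma_set R s.+1 s.+1).
have e0 : 0 < e by rewrite /e subr_gt0.
set m := maxn s.+1 (Num.bound e^-1).
have sm : (s < m)%N by rewrite /m leq_maxl.
have h1 := ub_le_sup hub (inS m sm).
have kt : (s./2 <= s.+1)%N by rewrite -divn2; have := leq_div s 2; lia.
have h2 := real_lb R m (t := s.+1) (k := s./2) isT kt.
rewrite mV_total (total_Vc sm) in h1.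
have ei : 0 < e^-1 by rewrite invr_gt0.
have hb := archi_boundP (ltW ei).
have hm : (Num.bound e^-1 <= m)%N by rewrite /m leq_maxr.
have hM : (Num.bound e^-1)%:R <= m%:R :> R by rewrite ler_nat.
have hM1 : m%:R < m.+1%:R :> R by rewrite ltr_nat.
have i1 : e * e^-1 = 1 by rewrite mulfV // gt_eqF.
have M0 : 0 < m.+1%:R :> R by rewrite ltr0n.
have i2 : m.+1%:R * (m.+1%:R)^-1 = 1 :> R by rewrite mulfV // gt_eqF.
have i3 : 0 < (m.+1%:R)^-1 :> R by rewrite invr_gt0.
move: h1 h2; rewrite -/bnd.
set v := (_ / _ : R) => h1 h2.
have : (m.+1%:R)^-1 < e.
  have : e^-1 < m.+1%:R by apply: (lt_le_trans hb); apply: (le_trans hM); exact: ltW.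
  move=> h; rewrite -[X in _ < X](invrK e) ltf_pV2 // posrE //.
have X : e <= (m.+1%:R)^-1.
  rewrite /e lerBlDr addrC; apply: (le_trans h2); rewrite lerD2r; exact: h1.
by move=> h3; have := lt_le_trans h3 X; rewrite ltxx.
Qed.
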